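(* Let $r\geq 2$ and let $\mathcal{H}=(V,E)$ be an $r$-regular $r$-uniform hypergraph with no repeated hyperedge, $V=\{v_1,\dots,v_n\}$. Let $\mathcal{A}_{\mathcal{H}}$ be its layered e-adjacency tensor, $\Delta=\max_{1\le i\le n}\deg(v_i)$ and $\Delta^\star=\max_{1\le i\le k_{\max}-1}\deg(y_i)$ (defined in the context). Then $\mathcal{A}_{\mathcal{H}}$ has an eigenvalue $\lambda$ with $|\lambda|=\max(\Delta,\Delta^\star)$.
   Context: A hypergraph $\mathcal{H}=(V,E)$ on $V=\{v_1,\dots,v_n\}$ is a family $E$ of nonempty subsets (hyperedges) of $V$; it has no repeated hyperedge if its hyperedges are pairwise distinct; it is $r$-uniform if every hyperedge has cardinality $r$, and $r$-regular if every vertex has degree $r$ (degree $\deg(v_i)$ = number of hyperedges containing $v_i$). The range is $k_{\max}=\max\{|e|:e\in E\}$. Introduce new pairwise distinct vertices $y_1,\dots,y_{k_{\max}-1}\notin V$. The layered uniform hypergraph of $\mathcal{H}$ is the $k_{\max}$-uniform hypergraph on $V\cup\{y_1,\dots,y_{k_{\max}-1}\}$ with hyperedges $e\cup\{y_{|e|},\dots,y_{k_{\max}-1}\}$ for $e\in E$; $\deg(y_i)$ is the number of these hyperedges containing $y_i$. The layered e-adjacency tensor $\mathcal{A}_{\mathcal{H}}=(a_{i_1\dots i_{k_{\max}}})$ is the symmetric hypermatrix of order $k_{\max}$ and dimension $N=n+k_{\max}-1$ (index $i\le n$ for $v_i$, index $n+l$ for $y_l$) such that: for each $e=\{v_{i_1},\dots,v_{i_j}\}\in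 E$ with $i_1<\dots<i_j$, putting $i_l=n+l-1$ for $l\in\{j+1,\dots,k_{\max}\}$, every entry whose index tuple is a permutation of $(i_1,\dots,i_{k_{\max}})$ equals $\frac{1}{(k_{\max}-1)!}$; all other entries are $0$. Eigenvalues (in the sense of Qi): for a hypermatrix $\mathcal{A}=(a_{i_1\dots i_m})$ of order $m$ and dimension $N$, $\lambda\in\mathbb{C}$ is an eigenvalue if there exists a nonzero $x\in\mathbb{C}^N$ with $\sum_{i_2,\dots,i_m=1}^{N} a_{i i_2\dots i_m}x_{i_2}\cdots x_{i_m}=\lambda x_i^{m-1}$ for all $i$. *)

(* Defs.v *)
From HB Require Import structures.
From mathcomp Require Import all_boot all_order all_algebra.
Set Implicit Arguments. Unset Strict Implicit. Unset Printing Implicit Defensive.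
Import Order.TTheory GRing.Theory Num.Theory.
Local Open Scope ring_scope.

(* A hypergraph on V = {v_1..v_n} is represented by n and a sequence E of
   hyperedges (subsets of 'I_n); vertex v_i is the ordinal i-1. *)

Definition hdeg (n : nat) (E : seq {set 'I_n}) (v : 'I_n) : nat :=
  count (fun e : {set 'I_n} => v \in e) E.

Definition kmax (n : nat) (E : seq {set 'I_n}) : nat :=
  (\max_(e <- E) #|e|)%N.

Definition ldim (n : nat) (E : seq {set 'I_n}) : nat := n + (kmax E).-1.

(* Layered hyperedge of e, as a subset of 'I_N (0-based indices):
   index i < n is vertex v_(i+1); index n + l - 1 (1 <= l <= kmax-1) is y_l.
   e is extended by y_|e|, ..., y_(kmax-1), i.e. indices i >= n with
   |e| <= i - n + 1. *)
Definition layered_edge (n : nat) (E : seq {set 'I_n}) (e : {set 'I_n})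
  : {set 'I_(ldim E)} :=
  [set i : 'I_(ldim E) |
     if (i < n)%N then [exists v : 'I_n, (val v == val i) && (v \in e)]
     else (#|e| <= i - n + 1)%N].
Arguments layered_edge {n} E e.

Definition ldeg (n : nat) (E : seq {set 'I_n}) (i : 'I_(ldim E)) : nat :=
  count (fun e : {set 'I_n} => i \in layered_edge E e) E.
Arguments ldeg {n} E i.

Definition Delta (n : nat) (E : seq {set 'I_n}) : nat :=
  (\max_(v : 'I_n) hdeg E v)%N.

(* Delta* = max_{1<=l<=kmax-1} deg(y_l)  (0 if there are no y's) *)
Definition Delta_star (n : nat) (E : seq {set 'I_n}) : nat :=
  (\max_(i : 'I_(ldim E) | (n <= i)%N) ldeg E i)%N.

(* Entry of the layered e-adjacency tensor at index sequence s
   (s = (i_1,...,i_kmax)): 1/(kmax-1)! if s is a permutation of the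
   (duplicate-free) index tuple of the layered hyperedge of some e in E,
   0 otherwise. *)
Definition ltensor (C : numClosedFieldType) (n : nat) (E : seq {set 'I_n})
  (s : seq 'I_(ldim E)) : C :=
  if [&& size s == kmax E, uniq s &
        has (fun e : {set 'I_n} => [set x in s] == layered_edge E e) E]
  then (((kmax E).-1)`!%:R)^-1 else 0.
Arguments ltensor C {n} E s.

Definition is_ltensor_eigenvalue (C : numClosedFieldType) (n : nat)
  (E : seq {set 'I_n}) (lambda : C) : Prop :=
  exists x : 'I_(ldim E) -> C, (exists i, x i != 0) /\
    forall i : 'I_(ldim E),
      \sum_(t : ((kmax E).-1).-tuple 'I_(ldim E))
          ltensor C E (i :: t) * \prod_(j <- t) x j
      = lambda * x i ^+ (kmax E).-1.

(* Main.v *)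
From mathcomp Require Import all_boot fingroup perm.
Require Import Defs.
From mathcomp Require Import all_boot all_order all_algebra zify.
Import Order.TTheory GRing.Theory Num.Theory.

Lemma card_perm_tuples (T : finType) (k : nat) (t0 : k.-tuple T) :
  uniq t0 -> #|[pred t : k.-tuple T | perm_eq t t0]| = k`!.
Proof.
move=> u0.
pose f := fun p : 'S_k => [tuple tnth t0 (p i) | i < k].
have finj : injective f.
  move=> p q /(congr1 (fun t : k.-tuple T => tnth t)) H.
  apply/perm.permP => i; have := congr1 (fun g => g i) H.
  rewrite !tnth_mktuple => /(tuple_uniqP _ u0); done.
rewrite -card_Sn -(card_imset _ finj); apply: eq_card => t.
rewrite inE /=; apply/tuple_permP/imsetP => [[p Hp]|[p _ ->]]; last by exists p.
by exists p => //; apply: val_inj.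
Qed.

Local Open Scope ring_scope.

Lemma max_const_seq (T : eqType) (s : seq T) (F : T -> nat) (r : nat) :
  s != [::] -> all (fun e => F e == r) s -> (\max_(e <- s) F e)%N = r.
Proof.
elim: s => // a s IH _ /= /andP[/eqP Ha Hs]; rewrite big_cons Ha.
case: s IH Hs => [|b s] IH Hs; first by rewrite big_nil maxn0.
by rewrite IH // maxnn.
Qed.

Section Layer.
Variables (n : nat) (E : seq {set 'I_n}).

Definition wv (v : 'I_n) : 'I_(ldim E) := @Ordinal (ldim E) v (ltn_addr _ (ltn_ord v)).

Lemma wv_inj : injective wv.
Proof. by move=> u v /(congr1 val) /= /val_inj. Qed.

Lemma L_low (j : 'I_(ldim E)) (hj : (j < n)%N) (e : {set 'I_n}) :
  (j \in layered_edge E e) = (Ordinal hj \in e).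
Proof.
rewrite inE hj; apply/existsP/idP => [[v /andP[/eqP hv ve]]|je].
  by have -> : Ordinal hj = v by apply: val_inj.
by exists (Ordinal hj); rewrite eqxx.
Qed.

Lemma L_wv (v : 'I_n) e : (wv v \in layered_edge E e) = (v \in e).
Proof. by rewrite (@L_low (wv v) (ltn_ord v)) (_ : Ordinal _ = v) //; apply: val_inj. Qed.

Lemma L_inj : injective (layered_edge E).
Proof. move=> e1 e2 H; apply/finset.setP => v. by rewrite -!L_wv H. Qed.

Lemma L_high (j : 'I_(ldim E)) (e : {set 'I_n}) : (n <= j)%N -> (kmax E <= #|e|)%N ->
  j \notin layered_edge E e.
Proof.
move=> hj hk; rewrite inE ltnNge hj /= -ltnNge.
move: (nat_of_ord j) hj (ltn_ord j) => jj hj; rewrite /ldim.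
move: (kmax E) hk => [|K] hk /=.
lia.
move=> h; apply: leq_trans hk; lia.
Qed.

Lemma L_card (e : {set 'I_n}) : (kmax E <= #|e|)%N -> #|layered_edge E e| = #|e|.
Proof.
move=> hk; rewrite -(card_imset _ wv_inj); suff -> : layered_edge E e = wv @: e by [].
apply/finset.setP => j.
case: (ltnP j n) => hj.
  rewrite (@L_low _ hj); apply/idP/imsetP => [je|[v ve hv]]; last first.
    by rewrite (_ : Ordinal hj = v) //; apply: val_inj; rewrite /= hv.
  by exists (Ordinal hj) => //; apply: val_inj.
rewrite (negbTE (@L_high _ _ hj hk)); apply/esym/negbTE/imsetP => [[v _ hv]].
by move: hj; rewrite hv /= leqNgt ltn_ord.
Qed.
End Layer.

Theorem mainTheorem3 (C : numClosedFieldType) (r n : nat)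
  (E : seq {set 'I_n})
  (Hr : (2 <= r)%N)
  (Hn : (0 < n)%N)
  (Hne : all (fun e : {set 'I_n} => e != set0) E)
  (Huniq : uniq E)
  (Hunif : all (fun e : {set 'I_n} => #|e| == r) E)
  (Hreg : forall v : 'I_n, hdeg E v = r) :
  exists lambda : C, is_ltensor_eigenvalue E lambda /\
    `|lambda| = (maxn (Delta E) (Delta_star E))%:R.
Proof.
pose v0 : 'I_n := Ordinal Hn.
have E0 : E != [::].
  apply/eqP => E0; have := Hreg v0; rewrite E0 /hdeg /= => h.
  by rewrite -h in Hr.
have hK : kmax E = r by apply: max_const_seq.
have Hcard : forall e, e \in E -> #|e| = r by move=> e /(allP Hunif) /eqP.
have HkE : forall e, e \in E -> (kmax E <= #|e|)%N by move=> e /Hcard ->; rewrite hK.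
have Lh : forall (j : 'I_(ldim E)) e, e \in E -> (n <= j)%N -> j \notin layered_edge E e.
  by move=> j e eE hj; apply: L_high => //; apply: HkE.
exists r%:R; split; last first.
  have -> : Delta E = r.
    rewrite /Delta (eq_bigr (fun _ => r)) //; apply/eqP; rewrite eqn_leq; apply/andP; split.
      by apply/bigmax_leqP.
    exact: (leq_bigmax (F := fun _ => r) v0).
  have -> : Delta_star E = 0%N.
    rewrite /Delta_star big1 // => j hj; rewrite /ldeg; apply/eqP.
    rewrite -leqn0 leqNgt -has_count; apply/hasPn => e eE; exact: Lh.
  by rewrite maxn0 normr_nat.
pose x := fun j : 'I_(ldim E) => if (j < n)%N then (1:C) else 0.
exists x; split.
  by exists (@wv n E v0); rewrite /x /= Hn oner_neq0.
move=> i.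
set c : C := ((kmax E).-1`!%:R)^-1.
set L := layered_edge E.
have step1 : forall t : (kmax E).-1.-tuple 'I_(ldim E), ltensor C E (i :: t) =
    \sum_(e <- E) (if uniq (i::t) && ([set y in i::t] == L e) then c else 0).
  move=> t; rewrite /ltensor.
  have -> : (size (i :: t) == kmax E) = true by rewrite /= size_tuple hK prednK ?eqxx // ltnW.
  case: (uniq (i::t)) => /=; last by rewrite big1.
  rewrite -big_mkcond /=.
  transitivity (\sum_(e <- E | [set y in i::t] == L e) c *+ 1%N); last by [].
  rewrite sumrMnr sum1_count.
  have uL : uniq (map L E) by rewrite map_inj_uniq //; apply: L_inj.
  have -> : has (fun e => [set y in i :: t] == L e) E = ([set y in i::t] \in map L E).
    by rewrite -has_pred1 has_map; apply: eq_has => e /=; rewrite eq_sym.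
  have -> : count (fun e => [set y in i :: t] == L e) E = count_mem [set y in i::t] (map L E).
    by rewrite count_map; apply: eq_count => e /=; rewrite eq_sym.
  by rewrite count_uniq_mem //; case: (_ \in _).
have step3 : forall e, e \in E ->
    \sum_(t : (kmax E).-1.-tuple 'I_(ldim E))
      (if uniq (i::t) && ([set y in i::t] == L e) then c else 0) * \prod_(j <- t) x j
    = if i \in L e then 1 else 0.
  move=> e eE; case: (boolP (i \in L e)) => iL; last first.
    apply: big1 => t _.
    have -> : ([set y in i :: t] == L e) = false.
      apply/negbTE; apply: contraNneq iL => <-; by rewrite inE mem_head.
    by rewrite andbF mul0r.
  have hin : (i < n)%N by rewrite ltnNge; apply: contraL iL => hi; exact: Lh.
  pose s := enum (L e).
  have is_ : i \in s by rewrite mem_enum.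
  have hsz : size (rem i s) == (kmax E).-1.
    by rewrite (size_rem is_) -cardE L_card ?Hcard ?hK // HkE.
  pose t0 := Tuple hsz.
  have ut0 : uniq t0 by rewrite /= rem_uniq // enum_uniq.
  have hP : forall t : (kmax E).-1.-tuple 'I_(ldim E),
      uniq (i::t) && ([set y in i::t] == L e) = perm_eq t t0.
    move=> t; transitivity (perm_eq (i::t) s).
      apply/idP/idP.
        move=> /andP[u /eqP hS]; apply: uniq_perm; [done | exact: enum_uniq |].
        by move=> y; rewrite mem_enum -hS in_set.
      move=> hp; rewrite (perm_uniq hp) enum_uniq /=; apply/eqP/finset.setP => y.
      by rewrite in_set (perm_mem hp) mem_enum.
    have hp := @perm_to_rem _ i s is_.
    rewrite -(perm_cons i t t0) /=; apply/idP/idP => h.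
      exact: perm_trans h hp.
    by apply: perm_trans h _; rewrite perm_sym.
  transitivity (\sum_(t : (kmax E).-1.-tuple 'I_(ldim E) | perm_eq t t0) c).
    rewrite [RHS]big_mkcond; apply: eq_bigr => t _; rewrite hP.
    case: ifP => hp; last by rewrite mul0r.
    rewrite big1_seq ?mulr1 // => j /andP[_ jt].
    have : j \in L e.
      by rewrite -mem_enum; apply: (mem_rem (x := i)); rewrite -[rem _ _]/(tval t0) -(perm_mem hp).
    move=> jL; rewrite /x ifT //; rewrite ltnNge; apply: contraL jL => hj; exact: Lh.
  transitivity (c *+ #|[pred t : (kmax E).-1.-tuple 'I_(ldim E) | perm_eq t t0]|).
    by rewrite -sumr_const; apply: eq_bigl => t; rewrite inE.
  rewrite card_perm_tuples //.
  by rewrite -(mulr_natr c) /c mulVf // pnatr_eq0 -lt0n fact_gt0.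
transitivity (\sum_(e <- E) (if i \in L e then (1:C) else 0)).
  under eq_bigr => t _ do rewrite step1 mulr_suml.
  rewrite exchange_big /= big_seq [RHS]big_seq; apply: eq_bigr => e eE.
  exact: step3.
rewrite -big_mkcond /=.
transitivity ((count (fun e => i \in L e) E)%:R : C).
  by rewrite -sum1_count natr_sum.
case: (ltnP i n) => hin.
  have -> : count (fun e => i \in L e) E = hdeg E (Ordinal hin).
    by apply: eq_count => e; rewrite /L (@L_low n E i hin).
  by rewrite Hreg /x hin expr1n mulr1.
have -> : count (fun e => i \in L e) E = 0%N.
  by rewrite (eq_in_count (a2 := pred0)) ?count_pred0 // => e eE /=; apply/negbTE; exact: Lh.
by rewrite /x ltnNge hin /= hK expr0n /=; case: (r) Hr => [|[|m]] //; rewrite mulr0.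
Qed.
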